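(* Let $n \ge 1$ be an integer, let $Z = (z_1,\dots,z_n)^T \in \mathbb{R}^n$, let $r > 0$ and let $\epsilon \in (0,1)$. For a parameter $\lambda > 0$ define the two-SAF-layer network $y_\lambda:\mathbb{R}^n \to (0,1]$ by $$r_k(X) = \lambda (x_k - z_k),\quad s_k(X) = e^{-r_k(X)^2}\ (k=1,\dots,n),\quad t(X) = \sum_{k=1}^n s_k(X) - n,\quad y_\lambda(X) = e^{-t(X)^2},$$ for $X = (x_1,\dots,x_n)^T$. Let $\Omega = \{X \in \mathbb{R}^n : \lVert X - Z\rVert \le r\}$ (Euclidean norm), and for $\tau \in (0,1)$ let $\Omega'_{\lambda,\tau} = \{X \in \mathbb{R}^n : y_\lambda(X) \ge \tau\}$. Then there exist $\lambda > 0$ and $\tau \in (0,1)$ such that $$\frac{V(\Omega \cap \Omega'_{\lambda,\tau})}{V(\Omega \cup \Omega'_{\lambda,\tau})} \ge 1 - \epsilon,$$ where $V$ denotes $n$-dimensional Lebesgue measure.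
   Context: This formalizes the statement that a network consisting of two layers of the one-dimensional radial basis function $\sigma(u) = e^{-u^2}$ (a ''symmetric activation function''), with an affine layer before each, can decide membership of a sample $X$ in the closed Euclidean ball of radius $r$ centred at $Z$ with arbitrarily small error, the decision being ''$X$ is in the ball iff $y_\lambda(X) \ge \tau$'', and the error being measured by one minus the ratio of the volume of the intersection to the volume of the union of the true ball and the accepted region. *)

(* Defs.v *)
From Stdlib Require Import Reals Lra.
Open Scope R_scope.

(* Points of R^n are represented as functions nat -> R; only coordinates
   0..n-1 are relevant. *)

Fixpoint rsum (n : nat) (f : nat -> R) : R :=
  match n with O => 0 | S m => rsum m f + f m end.

Fixpoint rprod (n : nat) (f : nat -> R) : R :=
  match n with O => 1 | S m => rprod m f * f m end.

Definition dist_n (n : nat) (X Z : nat -> R) : R :=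
  sqrt (rsum n (fun k => (X k - Z k) ^ 2)).

Definition saf_net (n : nat) (Z : nat -> R) (lam : R) (X : nat -> R) : R :=
  let s := fun k => exp (- (lam * (X k - Z k)) ^ 2) in
  let t := rsum n s - INR n in
  exp (- t ^ 2).

Definition box_vol (n : nat) (a b : nat -> R) : R :=
  rprod n (fun i => b i - a i).

Definition cover_sums (n : nat) (S : (nat -> R) -> Prop) (s : R) : Prop :=
  exists a b : nat -> nat -> R,
    (forall k i, a k i <= b k i) /\
    (forall X, S X -> exists k, forall i, (i < n)%nat -> a k i <= X i <= b k i) /\
    infinite_sum (fun k => box_vol n (a k) (b k)) s.

(* m is the n-dimensional Lebesgue (outer) measure of S, assumed finite:
   the infimum of total volumes of countable box covers. On Lebesgue
   measurable sets this coincides with Lebesgue measure. *)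
Definition lebesgue_measure_is (n : nat) (S : (nat -> R) -> Prop) (m : R) : Prop :=
  (forall s, cover_sums n S s -> m <= s) /\
  (forall m', (forall s, cover_sums n S s -> m' <= s) -> m' <= m).

(* Main.v *)
Require Import Defs.
From Stdlib Require Import Reals Lra Lia ZArith Classical ClassicalEpsilon.
Open Scope R_scope.

Definition indic (P : Prop) : R := if excluded_middle_informative P then 1 else 0.

Lemma indic_01 P : 0 <= indic P <= 1.
Proof. unfold indic; destruct excluded_middle_informative; lra. Qed.
Lemma indic_1 (P : Prop) : P -> indic P = 1.
Proof. unfold indic; destruct excluded_middle_informative; tauto. Qed.
Lemma indic_0 (P : Prop) : ~ P -> indic P = 0.
Proof. unfold indic; destruct excluded_middle_informative; tauto. Qed.
Lemma indic_mono (P Q : Prop) : (P -> Q) -> indic P <= indic Q.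
Proof.
  intros H; unfold indic; do 2 destruct excluded_middle_informative; try lra; tauto.
Qed.

Lemma rsum_ext n f g : (forall k, (k < n)%nat -> f k = g k) -> rsum n f = rsum n g.
Proof. induction n; simpl; intros; auto. rewrite IHn, H; auto; lia. Qed.
Lemma rsum_le n f g : (forall k, (k < n)%nat -> f k <= g k) -> rsum n f <= rsum n g.
Proof. induction n; simpl; intros. lra. specialize (IHn (fun k h => H k ltac:(lia))). specialize (H n ltac:(lia)). lra. Qed.
Lemma rsum_nonneg n f : (forall k, (k < n)%nat -> 0 <= f k) -> 0 <= rsum n f.
Proof. intros; apply Rle_trans with (rsum n (fun _ => 0)). clear H; induction n; simpl; lra.
  apply rsum_le; auto. Qed.
Lemma rsum_plus n f g : rsum n (fun k => f k + g k) = rsum n f + rsum n g.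
Proof. induction n; simpl; lra. Qed.
Lemma rsum_minus n f g : rsum n (fun k => f k - g k) = rsum n f - rsum n g.
Proof. induction n; simpl; lra. Qed.
Lemma rsum_scal n c f : rsum n (fun k => c * f k) = c * rsum n f.
Proof. induction n; simpl; lra. Qed.
Lemma rsum_const1 n : rsum n (fun _ => 1) = INR n.
Proof. induction n; simpl rsum. simpl; lra. rewrite S_INR; lra. Qed.
Lemma rsum_term n f k : (forall j, (j < n)%nat -> 0 <= f j) -> (k < n)%nat -> f k <= rsum n f.
Proof.
  induction n; intros H Hk. lia. simpl.
  assert (0 <= rsum n f) by (apply rsum_nonneg; intros; apply H; lia).
  destruct (Nat.eq_dec k n). subst. lra.
  specialize (IHn (fun j h => H j ltac:(lia)) ltac:(lia)). specialize (H n ltac:(lia)). lra.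
Qed.
Lemma rsum_mono_n f N N' : (forall k, 0 <= f k) -> (N <= N')%nat -> rsum N f <= rsum N' f.
Proof. intros H Hl; induction Hl. lra. simpl. specialize (H m). lra. Qed.
Lemma rsum_swap M N (f : nat -> nat -> R) :
  rsum M (fun j => rsum N (fun k => f j k)) = rsum N (fun k => rsum M (fun j => f j k)).
Proof.
  induction M; simpl. induction N; simpl; lra.
  rewrite IHM, <- rsum_plus; reflexivity.
Qed.
Lemma rsum_sum_f f N : rsum (S N) f = sum_f_R0 f N.
Proof. induction N. simpl; lra. change (rsum (S (S N)) f) with (rsum (S N) f + f (S N)). rewrite IHN; simpl; lra. Qed.

Lemma rprod_nonneg n f : (forall i, (i < n)%nat -> 0 <= f i) -> 0 <= rprod n f.
Proof. induction n; simpl; intros. lra. apply Rmult_le_pos; auto. Qed.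
Lemma rprod_pos n f : (forall i, (i < n)%nat -> 0 < f i) -> 0 < rprod n f.
Proof. induction n; simpl; intros. lra. apply Rmult_lt_0_compat; auto. Qed.
Lemma rprod_ext n f g : (forall k, (k < n)%nat -> f k = g k) -> rprod n f = rprod n g.
Proof. induction n; simpl; intros; auto. rewrite IHn, H; auto; lia. Qed.
Lemma rprod_scal n f c : rprod n (fun i => f i * c) = rprod n f * c ^ n.
Proof. induction n; simpl; [lra|]. rewrite IHn; ring. Qed.
Lemma rprod_const n c : rprod n (fun _ => c) = c ^ n.
Proof. induction n; simpl; [lra|]. rewrite IHn; ring. Qed.

Lemma partial_le f s : (forall k, 0 <= f k) -> infinite_sum f s -> forall N, rsum N f <= s.
Proof.
  intros Hf Hs.
  assert (G : forall N, sum_f_R0 f N <= s).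
  { apply growing_ineq; [|exact Hs]. intro N; simpl. specialize (Hf (S N)); lra. }
  intros [|N]. simpl. specialize (G 0%nat); specialize (Hf 0%nat); simpl in G; lra.
  rewrite rsum_sum_f; auto.
Qed.

Section OneD.
Variables (a b c : nat -> R).
Hypothesis Hab : forall k, a k <= b k.
Hypothesis Hc : forall k, 0 <= c k.

Definition F N t := rsum N (fun k => c k * indic (a k < t < b k)).

Lemma F_mono N N' t : (N <= N')%nat -> F N t <= F N' t.
Proof. intros; apply rsum_mono_n; auto. intro k; apply Rmult_le_pos; auto; apply indic_01. Qed.

Lemma F_lsc N t : exists d, 0 < d /\ forall t', Rabs (t' - t) < d -> F N t <= F N t'.
Proof.
  induction N. exists 1; split; [lra|]; intros; unfold F; simpl; lra.
  destruct IHN as [d [Hd H]].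
  destruct (classic (a N < t < b N)) as [Hin|Hout].
  - exists (Rmin d (Rmin (t - a N) (b N - t))). split.
    { repeat apply Rmin_glb_lt; lra. }
    intros t' Ht'. unfold F; simpl.
    assert (Rabs (t'-t) < d) by (eapply Rlt_le_trans; [exact Ht'|apply Rmin_l]).
    assert (Rabs (t'-t) < t - a N) by (eapply Rlt_le_trans; [exact Ht'|eapply Rle_trans;[apply Rmin_r|apply Rmin_l]]).
    assert (Rabs (t'-t) < b N - t) by (eapply Rlt_le_trans; [exact Ht'|eapply Rle_trans;[apply Rmin_r|apply Rmin_r]]).
    specialize (H t' H0). unfold F in H.
    rewrite (indic_1 _ Hin), indic_1. lra.
    apply Rabs_def2 in H1; apply Rabs_def2 in H2; lra.
  - exists d; split; auto. intros t' Ht'. unfold F; simpl.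
    specialize (H t' Ht'). unfold F in H. rewrite (indic_0 _ Hout).
    pose proof (indic_01 (a N < t' < b N)). specialize (Hc N). nra.
Qed.

Lemma uniform_N p q th : p <= q ->
  (forall t, p <= t <= q -> exists N, th < F N t) ->
  exists N, forall t, p <= t <= q -> th < F N t.
Proof.
  intros Hpq Hcov.
  set (E := fun u => p <= u <= q /\ exists N, forall t, p <= t <= u -> th < F N t).
  assert (Eb : bound E). { exists q; intros u [Hu _]; lra. }
  assert (Ep : exists u, E u).
  { exists p. destruct (Hcov p ltac:(lra)) as [N HN]. split; [lra|]. exists N.
    intros t Ht. replace t with p by lra. auto. }
  destruct (completeness E Eb Ep) as [us [Hub Hlub]].
  assert (Hus : p <= us <= q).
  { split. destruct Ep as [u Hu]. pose proof (Hub u Hu). destruct Hu; lra.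
    apply Hlub. intros u [Hu _]; lra. }
  destruct (Hcov us Hus) as [N0 HN0].
  destruct (F_lsc N0 us) as [d [Hd Hl]].
  assert (exists u, E u /\ us - d < u).
  { apply NNPP; intro Hn.
    assert (us <= us - d); [|lra]. apply Hlub. intros u Hu.
    apply Rnot_lt_le; intro; apply Hn; exists u; auto. }
  destruct H as [u [[Hu [N1 HN1]] Hud]].
  set (v := Rmin q (us + d/2)).
  assert (Ev : E v).
  { split. split; [unfold v; apply Rmin_glb; lra | apply Rmin_l].
    exists (Nat.max N0 N1). intros t Ht.
    destruct (Rle_dec t u).
    - eapply Rlt_le_trans; [apply HN1; split; [apply Ht|assumption]|apply F_mono; lia].
    - assert (t <= us + d/2) by (eapply Rle_trans; [apply Ht|apply Rmin_r]).
      assert (Rabs (t - us) < d).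
      { pose proof (Hub u ltac:(split; [lra| exists N1; auto])). apply Rabs_def1; lra. }
      eapply Rlt_le_trans; [apply HN0|]. eapply Rle_trans; [apply Hl; eauto|apply F_mono; lia]. }
  assert (v <= us) by (apply Hub; auto).
  assert (v = q).
  { unfold v in *. destruct (Rle_dec q (us + d/2)). rewrite Rmin_left; auto.
    rewrite Rmin_right in H; lra. }
  rewrite H0 in Ev. destruct Ev as [_ [N HN]]. exists N; intros; apply HN; lra.
Qed.

End OneD.

Lemma count_half M al be :
  rsum M (fun j => indic (al < INR j + /2 < be)) <= Rmax 0 (be - al + 1).
Proof.
  revert al be; induction M; intros al be. simpl; apply Rmax_l.
  simpl rsum. destruct (classic (al < INR M + /2 < be)) as [Hin|Hout].
  - rewrite (indic_1 _ Hin).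
    assert (rsum M (fun j => indic (al < INR j + /2 < be)) <= rsum M (fun j => indic (al < INR j + /2 < be - 1))).
    { apply rsum_le; intros k Hk; apply indic_mono. intros [H1 H2]; split; auto.
      assert (INR k + 1 <= INR M) by (rewrite <- S_INR; apply le_INR; lia). lra. }
    specialize (IHM al (be - 1)).
    rewrite Rmax_right by lra. unfold Rmax in IHM; destruct Rle_dec; lra.
  - rewrite (indic_0 _ Hout). rewrite Rplus_0_r. apply IHM.
Qed.

Lemma L1 (a b c : nat -> R) p q th s :
  (forall k, a k <= b k) -> (forall k, 0 <= c k) -> p < q ->
  (forall t, p <= t <= q -> exists N, th < rsum N (fun k => c k * indic (a k < t < b k))) ->
  (forall N, rsum N (fun k => c k * (b k - a k)) <= s) ->
  th * (q - p) <= s.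
Proof.
  intros Hab Hc Hpq Hcov Hs.
  destruct (uniform_N a b c Hc p q th ltac:(lra) Hcov) as [N HN]. unfold F in HN.
  set (C := rsum N c).
  assert (Hgrid : forall M, (1 <= M)%nat -> INR M * th <= INR M / (q - p) * s + C).
  { intros M HM. assert (HMp : 0 < INR M) by (apply lt_0_INR; lia).
    set (t := fun j => p + (INR j + /2) * (q - p) / INR M).
    assert (Ht : forall j, (j < M)%nat -> p <= t j <= q).
    { intros j Hj. unfold t. assert (INR j + 1 <= INR M) by (rewrite <- S_INR; apply le_INR; lia).
      assert (0 <= INR j) by apply pos_INR.
      split. assert (0 <= (INR j + /2) * (q - p) / INR M); [|lra].
      apply Rmult_le_pos; [nra|left; apply Rinv_0_lt_compat; auto].
      assert ((INR j + /2) * (q - p) / INR M <= q - p); [|lra].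
      apply Rmult_le_reg_r with (INR M); auto. unfold Rdiv; rewrite Rmult_assoc, Rinv_l by lra. nra. }
    assert (H1 : INR M * th <= rsum M (fun j => rsum N (fun k => c k * indic (a k < t j < b k)))).
    { rewrite <- rsum_const1, Rmult_comm, <- rsum_scal. apply rsum_le; intros j Hj.
      left; rewrite Rmult_1_r; apply HN; auto. }
    rewrite rsum_swap in H1.
    assert (H2 : rsum N (fun k => rsum M (fun j => c k * indic (a k < t j < b k)))
              <= rsum N (fun k => c k * ((b k - a k) * INR M / (q - p) + 1))).
    { apply rsum_le; intros k Hk. rewrite rsum_scal. apply Rmult_le_compat_l; auto.
      eapply Rle_trans; [| eapply Rle_trans; [apply (count_half M ((a k - p) * INR M / (q - p)) ((b k - p) * INR M / (q - p)))|]].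
      - apply rsum_le; intros j _. apply indic_mono. unfold t. intros [H3 H4].
        assert (Hq : 0 < (q - p) / INR M) by (apply Rdiv_lt_0_compat; lra).
        split.
        + apply Rmult_lt_reg_r with ((q-p)/INR M); auto.
          replace ((a k - p) * INR M / (q - p) * ((q - p) / INR M)) with (a k - p) by (field; lra).
          replace ((INR j + /2) * ((q - p) / INR M)) with ((INR j + /2) * (q - p) / INR M) by (field; lra). lra.
        + apply Rmult_lt_reg_r with ((q-p)/INR M); auto.
          replace ((b k - p) * INR M / (q - p) * ((q - p) / INR M)) with (b k - p) by (field; lra).
          replace ((INR j + /2) * ((q - p) / INR M)) with ((INR j + /2) * (q - p) / INR M) by (field; lra). lra.
      - rewrite Rmax_right. right; field; lra.
        assert (0 <= (b k - a k) * INR M / (q - p)).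
        { apply Rmult_le_pos; [apply Rmult_le_pos; [specialize (Hab k); lra|lra]|left; apply Rinv_0_lt_compat; lra]. }
        replace ((b k - p) * INR M / (q - p) - (a k - p) * INR M / (q - p) + 1) with ((b k - a k) * INR M / (q - p) + 1) by (field; lra). lra. }
    assert (H3 : rsum N (fun k => c k * ((b k - a k) * INR M / (q - p) + 1)) = INR M / (q - p) * rsum N (fun k => c k * (b k - a k)) + C).
    { unfold C. rewrite <- rsum_scal, <- rsum_plus. apply rsum_ext; intros; field; lra. }
    assert (H4 : INR M / (q - p) * rsum N (fun k => c k * (b k - a k)) <= INR M / (q - p) * s).
    { apply Rmult_le_compat_l; [apply Rmult_le_pos; [lra|left; apply Rinv_0_lt_compat; lra]|apply Hs]. }
    lra. }
  apply Rnot_lt_le; intro Hlt.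
  assert (HC : 0 <= C) by (apply rsum_nonneg; auto).
  set (g := th * (q - p) - s).
  assert (Hg : 0 < g) by (unfold g; lra).
  destruct (archimed (C * (q - p) / g)) as [Har _].
  set (M := S (Z.to_nat (up (C * (q - p) / g)))).
  assert (HMl : C * (q - p) / g < INR M).
  { unfold M. rewrite S_INR.
    assert (IZR (up (C * (q - p) / g)) <= INR (Z.to_nat (up (C * (q - p) / g)))).
    { destruct (up (C * (q - p) / g)) as [|pp|pp]; simpl.
      - lra.
      - rewrite INR_IZR_INZ, positive_nat_Z. lra.
      - pose proof (IZR_lt (Z.neg pp) 0 (Pos2Z.neg_is_neg pp)). lra. }
    lra. }
  specialize (Hgrid M ltac:(unfold M; lia)).
  assert (HMp : 0 < INR M) by (apply lt_0_INR; unfold M; lia).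
  assert (INR M * g <= C * (q - p)).
  { unfold g. apply Rmult_le_reg_r with (/ (q - p)). apply Rinv_0_lt_compat; lra.
    replace (INR M * (th * (q - p) - s) * / (q - p)) with (INR M * th - INR M / (q - p) * s) by (field; lra).
    replace (C * (q - p) * / (q - p)) with C by (field; lra). lra. }
  assert (C * (q - p) < INR M * g).
  { apply Rmult_lt_reg_r with (/g). apply Rinv_0_lt_compat; lra.
    replace (INR M * g * / g) with (INR M) by (field; lra). exact HMl. }
  lra.
Qed.

Lemma box_vol_S n a b : box_vol (S n) a b = box_vol n a b * (b n - a n).
Proof. reflexivity. Qed.

Lemma box_vol_nonneg n a b : (forall i, a i <= b i) -> 0 <= box_vol n a b.
Proof. intros; apply rprod_nonneg; intros; specialize (H i); lra. Qed.

Lemma Sn n : forall (a b : nat -> nat -> R) (w : nat -> R) (p q : nat -> R) th s,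
 (forall k i, a k i <= b k i) -> (forall k, 0 <= w k) -> (forall i, p i < q i) ->
 (forall x : nat -> R, (forall i, (i < n)%nat -> p i <= x i <= q i) ->
    exists N, th < rsum N (fun k => w k * indic (forall i, (i < n)%nat -> a k i < x i < b k i))) ->
 (forall N, rsum N (fun k => w k * box_vol n (a k) (b k)) <= s) ->
 th * box_vol n p q <= s.
Proof.
  induction n; intros a b w p q th s Hab Hw Hpq Hcov Hs.
  - destruct (Hcov (fun _ => 0) ltac:(intros; lia)) as [N HN].
    specialize (Hs N). unfold box_vol in *; simpl in *.
    assert (rsum N (fun k => w k * indic (forall i, (i < 0)%nat -> a k i < 0 < b k i)) = rsum N (fun k => w k * 1)).
    { apply rsum_ext; intros; rewrite indic_1; auto; intros; lia. }
    lra.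
  - set (V := box_vol n p q).
    assert (HV : 0 <= V) by (apply box_vol_nonneg; intros; specialize (Hpq i); lra).
    assert (key : forall g, 0 < g -> (th * V - g) * (q n - p n) <= s).
    { intros g Hg.
      apply (L1 (fun k => a k n) (fun k => b k n) (fun k => w k * box_vol n (a k) (b k))).
      - auto.
      - intros; apply Rmult_le_pos; auto; apply box_vol_nonneg; auto.
      - auto.
      - intros t Ht. apply NNPP; intro Hn.
        assert (Hn' : forall N, rsum N (fun k => (w k * indic (a k n < t < b k n)) * box_vol n (a k) (b k)) <= th * V - g).
        { intro N. apply Rnot_lt_le; intro Hl; apply Hn; exists N.
          eapply Rlt_le_trans; [exact Hl|]. right; apply rsum_ext; intros; ring. }
        assert (th * V <= th * V - g); [|lra].
        apply (IHn a b (fun k => w k * indic (a k n < t < b k n)) p q th (th * V - g) Hab).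
        + intros; apply Rmult_le_pos; auto; apply indic_01.
        + auto.
        + intros y Hy.
          destruct (Hcov (fun i => if Nat.eq_dec i n then t else y i)) as [N HN].
          { intros i Hi. destruct (Nat.eq_dec i n). subst; auto. apply Hy; lia. }
          exists N. eapply Rlt_le_trans; [exact HN|]. apply rsum_le; intros k Hk.
          destruct (classic (forall i, (i < S n)%nat -> a k i < (if Nat.eq_dec i n then t else y i) < b k i)) as [HA|HA].
          * rewrite (indic_1 _ HA), indic_1, indic_1. lra.
            intros i Hi. specialize (HA i ltac:(lia)). destruct (Nat.eq_dec i n); [lia|auto].
            specialize (HA n ltac:(lia)). destruct (Nat.eq_dec n n); [auto|lia].
          * rewrite (indic_0 _ HA). pose proof (indic_01 (a k n < t < b k n)).
            pose proof (indic_01 (forall i, (i < n)%nat -> a k i < y i < b k i)). specialize (Hw k). 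
            rewrite Rmult_0_r. apply Rmult_le_pos; [apply Rmult_le_pos|]; lra.
        + exact Hn'.
      - intros N. eapply Rle_trans; [|apply (Hs N)]. right; apply rsum_ext; intros.
        rewrite box_vol_S; ring. }
    unfold box_vol in *; simpl rprod. fold (box_vol n p q). fold V.
    specialize (Hpq n).
    apply Rnot_lt_le; intro Hl. change (box_vol n p q) with V in Hl.
    set (g := (th * (V * (q n - p n)) - s) / (2 * (q n - p n))).
    assert (0 < g) by (unfold g; apply Rdiv_lt_0_compat; lra).
    specialize (key g H).
    assert ((th * V - g) * (q n - p n) = th * (V * (q n - p n)) - (th * (V * (q n - p n)) - s) / 2).
    { unfold g; field; lra. }
    lra.
Qed.

Fixpoint Kf n (l : nat -> R) := match n with O => 0 | S m => Kf m l * (l m + 2) + 2 * rprod m l end.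

Lemma Kf_spec n l : (forall i, 0 <= l i) -> 0 <= Kf n l /\
  forall d, 0 <= d <= 1 -> rprod n (fun i => l i + 2 * d) <= rprod n l + d * Kf n l.
Proof.
  intros Hl; induction n; simpl.
  - split; intros; lra.
  - destruct IHn as [HK H]. assert (HP : 0 <= rprod n l) by (apply rprod_nonneg; auto).
    pose proof (Hl n) as Hln. split. nra.
    intros d Hd. specialize (H d Hd).
    assert (0 <= rprod n (fun i => l i + 2 * d)) by (apply rprod_nonneg; intros i _; specialize (Hl i); nra).
    assert (rprod n (fun i => l i + 2 * d) * (l n + 2 * d) <= (rprod n l + d * Kf n l) * (l n + 2 * d)) by (apply Rmult_le_compat_r; lra).
    assert (d * d * Kf n l <= d * Kf n l) by (apply Rmult_le_compat_r; [exact HK|nra]).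
    nra.
Qed.

Lemma geom N : rsum N (fun k => / 2 ^ (S k)) = 1 - / 2 ^ N.
Proof.
  induction N; cbn [rsum]. simpl; lra. rewrite IHN.
  assert (0 < 2 ^ N) by (apply pow_lt; lra). simpl. field. lra.
Qed.

Lemma pos_measure n (S : (nat -> R) -> Prop) p q s : (forall i, p i < q i) ->
  (forall x, (forall i, (i < n)%nat -> p i <= x i <= q i) -> S x) ->
  cover_sums n S s -> box_vol n p q <= s.
Proof.
  intros Hpq HS [a [b [Hab [Hcov Hsum]]]].
  assert (Hvol : forall k, 0 <= box_vol n (a k) (b k)) by (intros; apply box_vol_nonneg; auto).
  assert (Hpart := partial_le _ _ Hvol Hsum).
  assert (key : forall eta th, 0 < eta -> th < 1 -> th * box_vol n p q <= s + eta).
  { intros eta th Heta Hth.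
    set (l := fun k i => b k i - a k i).
    assert (Hl : forall k i, 0 <= l k i) by (intros; unfold l; specialize (Hab k i); lra).
    set (d := fun k => Rmin 1 (eta / (2 ^ (Datatypes.S k) * (Kf n (l k) + 1)))).
    assert (Hd : forall k, 0 < d k <= 1 /\ d k * Kf n (l k) <= eta / 2 ^ (Datatypes.S k)).
    { intro k. destruct (Kf_spec n (l k) (Hl k)) as [HK _].
      assert (H2 : 0 < 2 ^ (Datatypes.S k)) by (apply pow_lt; lra).
      assert (Hq : 0 < eta / (2 ^ (Datatypes.S k) * (Kf n (l k) + 1))) by (apply Rdiv_lt_0_compat; nra).
      unfold d. split. split; [apply Rmin_glb_lt; lra|apply Rmin_l].
      eapply Rle_trans. apply Rmult_le_compat_r; [exact HK|apply Rmin_r].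
      replace (eta / (2 ^ Datatypes.S k * (Kf n (l k) + 1)) * Kf n (l k)) with
        (eta / 2 ^ Datatypes.S k * (Kf n (l k) / (Kf n (l k) + 1))) by (field; lra).
      assert (Kf n (l k) / (Kf n (l k) + 1) <= 1).
      { apply Rmult_le_reg_r with (Kf n (l k) + 1); [lra|]. field_simplify; lra. }
      assert (0 < eta / 2 ^ Datatypes.S k) by (apply Rdiv_lt_0_compat; lra). nra. }
    apply (Sn n (fun k i => a k i - d k) (fun k i => b k i + d k) (fun _ => 1) p q th (s + eta)).
    - intros k i; specialize (Hab k i); specialize (Hd k); lra.
    - intros; lra.
    - auto.
    - intros x Hx. destruct (Hcov x (HS x Hx)) as [k Hk]. exists (Datatypes.S k).
      eapply Rlt_le_trans; [|apply (rsum_term _ _ k)].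
      + cbv beta. rewrite indic_1. lra. intros i Hi; specialize (Hk i Hi); specialize (Hd k); lra.
      + intros; rewrite Rmult_1_l; apply indic_01.
      + lia.
    - intro N. eapply Rle_trans.
      apply (rsum_le N _ (fun k => box_vol n (a k) (b k) + eta * / 2 ^ (Datatypes.S k))).
      { intros k _. rewrite Rmult_1_l. destruct (Kf_spec n (l k) (Hl k)) as [_ HK].
        specialize (Hd k). unfold box_vol.
        rewrite (rprod_ext n _ (fun i => l k i + 2 * d k)) by (intros; unfold l; ring).
        specialize (HK (d k) ltac:(lra)). unfold Rdiv in Hd. fold (box_vol n (a k) (b k)).
        unfold box_vol in *. fold (l k). lra. }
      rewrite rsum_plus, rsum_scal, geom. specialize (Hpart N).
      assert (0 < / 2 ^ N) by (apply Rinv_0_lt_compat, pow_lt; lra). nra. }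
  apply Rnot_lt_le; intro Hlt.
  set (V := box_vol n p q) in *.
  assert (HV : 0 < V) by (apply rprod_pos; intros; specialize (Hpq i); lra).
  set (eta := (V - s) / 2).
  specialize (key eta (1 - eta / (2 * V)) ltac:(unfold eta; lra)).
  assert (0 < eta) by (unfold eta; lra).
  assert (0 < eta / (2 * V)) by (apply Rdiv_lt_0_compat; lra).
  specialize (key ltac:(lra)).
  replace ((1 - eta / (2 * V)) * V) with (V - eta / 2) in key by (field; lra).
  unfold eta in key. lra.
Qed.

Definition Qd n (X Z : nat -> R) := rsum n (fun k => (X k - Z k) ^ 2).

Lemma Qd_nonneg n X Z : 0 <= Qd n X Z.
Proof. apply rsum_nonneg; intros; apply pow2_ge_0. Qed.

Lemma dist_le n X Z c : 0 <= c -> (dist_n n X Z <= c <-> Qd n X Z <= c ^ 2).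
Proof.
  intros Hc. unfold dist_n. fold (Qd n X Z). pose proof (Qd_nonneg n X Z).
  split; intro H1.
  - pose proof (sqrt_sqrt _ H). pose proof (sqrt_pos (Qd n X Z)). nra.
  - rewrite <- (sqrt_pow2 c Hc). apply sqrt_le_1_alt; auto.
Qed.

Lemma coord_bound n X Z r : 0 < r -> Qd n X Z <= r ^ 2 -> forall i, (i < n)%nat -> Z i - r <= X i <= Z i + r.
Proof.
  intros Hr H i Hi. assert ((X i - Z i) ^ 2 <= Qd n X Z).
  { apply (rsum_term n (fun k => (X k - Z k) ^ 2)); auto. intros; apply pow2_ge_0. }
  split; nra.
Qed.

Lemma measure_exists n (S : (nat -> R) -> Prop) Z R0 : (1 <= n)%nat -> 0 <= R0 ->
  (forall X, S X -> forall i, (i < n)%nat -> Z i - R0 <= X i <= Z i + R0) ->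
  exists m, lebesgue_measure_is n S m.
Proof.
  intros Hn HR HS.
  set (a := fun k i => if Nat.eq_dec k 0 then Z i - R0 else 0).
  set (b := fun k i => if Nat.eq_dec k 0 then Z i + R0 else 0).
  set (f := fun k => box_vol n (a k) (b k)).
  assert (Hf : forall k, k <> 0%nat -> f k = 0).
  { intros k Hk. unfold f, box_vol. rewrite (rprod_ext n _ (fun _ => 0)).
    rewrite rprod_const; apply pow_i; lia.
    intros j _; cbv beta; unfold a, b; destruct (Nat.eq_dec k 0); [lia|ring]. }
  assert (Hc : cover_sums n S (f 0%nat)).
  { exists a, b. split; [|split].
    - intros k i; unfold a, b; destruct Nat.eq_dec; lra.
    - intros X HX; exists 0%nat; intros i Hi; unfold a, b; simpl; apply HS; auto.
    - assert (G : forall N, sum_f_R0 f N = f 0%nat).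
      { induction N; [reflexivity|]. cbn [sum_f_R0]. rewrite IHN, (Hf (Datatypes.S N)) by lia. ring. }
      intros e He; exists 0%nat; intros N _; rewrite G; unfold R_dist; rewrite Rminus_diag, Rabs_R0; auto. }
  set (E := fun m' => forall s, cover_sums n S s -> m' <= s).
  assert (Eb : bound E) by (exists (f 0%nat); intros m' Hm'; apply Hm'; auto).
  assert (Ene : exists x, E x).
  { exists 0. intros s [a' [b' [Hab [_ Hs]]]].
    pose proof (partial_le _ _ (fun k => box_vol_nonneg n (a' k) (b' k) (Hab k)) Hs 0%nat). simpl in H; auto. }
  destruct (completeness E Eb Ene) as [m [Hub Hlub]].
  exists m; split.
  - intros s Hs. apply Hlub. intros m' Hm'; apply Hm'; auto.
  - intros m' Hm'. apply Hub; auto.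
Qed.

Lemma ew w : 0 <= w -> w * exp (- w) <= 1 - exp (- w) /\ 1 - exp (- w) <= w.
Proof.
  intros Hw. pose proof (exp_ineq1_le w). pose proof (exp_ineq1_le (- w)).
  assert (exp w * exp (- w) = 1) by (rewrite <- exp_plus, Rplus_opp_r, exp_0; auto).
  pose proof (exp_pos (- w)). split; nra.
Qed.

Lemma infinite_sum_scal f s C : infinite_sum f s -> infinite_sum (fun k => f k * C) (s * C).
Proof.
  intros Hs. assert (Hc : Un_cv (fun _ => C) C).
  { intros e He; exists 0%nat; intros; unfold R_dist; rewrite Rminus_diag, Rabs_R0; auto. }
  pose proof (CV_mult _ _ _ _ Hs Hc) as H.
  intros e He; destruct (H e He) as [N HN]; exists N; intros m Hm.
  replace (sum_f_R0 (fun k => f k * C) m) with (sum_f_R0 f m * C). apply HN; auto.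
  clear; induction m; simpl; [auto|rewrite <- IHm; ring].
Qed.

Lemma bern n x : 0 <= x <= 1 -> 1 - INR n * x <= (1 - x) ^ n.
Proof.
  intros Hx; induction n. simpl; lra.
  rewrite S_INR; simpl. assert (0 <= INR n) by apply pos_INR. nra.
Qed.

Section Net.
Variables (n : nat) (Z : nat -> R) (r rho : R).
Hypothesis Hr : 0 < r.
Hypothesis Hrho : 0 < rho < 1.
Let dl := 1 - rho ^ 2.
Let lam := sqrt dl / (rho * r).
Let tau := exp (- dl ^ 2).

Lemma dl_pos : 0 < dl < 1.
Proof. unfold dl; nra. Qed.

Lemma lam2 : lam ^ 2 = dl / (rho ^ 2 * r ^ 2).
Proof. pose proof dl_pos. assert (sqrt dl * sqrt dl = dl) by (apply sqrt_sqrt; lra).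
  unfold lam. rewrite <- H0 at 2. field. split; nra. Qed.

Definition Dd X := rsum n (fun k => 1 - exp (- (lam * (X k - Z k)) ^ 2)).

Lemma saf_D X : saf_net n Z lam X = exp (- (Dd X) ^ 2).
Proof.
  unfold saf_net, Dd. cbv zeta. f_equal. rewrite rsum_minus, rsum_const1. ring.
Qed.

Lemma D_bounds X : rho ^ 2 * (lam ^ 2 * Qd n X Z) <= Dd X \/ False ->
  True.
Proof. auto. Qed.

Lemma D_upper X : Dd X <= lam ^ 2 * Qd n X Z /\ 0 <= Dd X.
Proof.
  unfold Qd, Dd. rewrite <- rsum_scal. split.
  - apply rsum_le; intros k _. destruct (ew ((lam * (X k - Z k)) ^ 2)) as [_ H]. apply pow2_ge_0.
    replace (lam ^ 2 * (X k - Z k) ^ 2) with ((lam * (X k - Z k)) ^ 2) by ring. lra.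
  - apply rsum_nonneg; intros k _. destruct (ew ((lam * (X k - Z k)) ^ 2)) as [H _]. apply pow2_ge_0.
    pose proof (exp_pos (- (lam * (X k - Z k)) ^ 2)). pose proof (pow2_ge_0 (lam * (X k - Z k))). nra.
Qed.

Lemma claimA X : saf_net n Z lam X >= tau -> Qd n X Z <= r ^ 2.
Proof.
  rewrite saf_D. unfold tau. intros H. pose proof dl_pos. destruct (D_upper X) as [_ HD0].
  assert (HD : Dd X <= dl).
  { apply Rnot_lt_le; intro Hl. assert (- Dd X ^ 2 < - dl ^ 2) by nra.
    pose proof (exp_increasing _ _ H1). lra. }
  assert (Hs : rho ^ 2 * (lam ^ 2 * Qd n X Z) <= Dd X).
  { unfold Qd, Dd. rewrite <- !rsum_scal. apply rsum_le; intros k Hk.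
    set (w := (lam * (X k - Z k)) ^ 2).
    assert (Hw : 0 <= w) by apply pow2_ge_0.
    destruct (ew w Hw) as [H1 _].
    assert (1 - exp (- w) <= Dd X).
    { apply (rsum_term n (fun k => 1 - exp (- (lam * (X k - Z k)) ^ 2))); auto.
      intros j _. destruct (ew ((lam * (X j - Z j)) ^ 2)) as [H2 _]. apply pow2_ge_0.
      pose proof (exp_pos (- (lam * (X j - Z j)) ^ 2)). pose proof (pow2_ge_0 (lam * (X j - Z j))). nra. }
    replace (rho ^ 2 * (lam ^ 2 * (X k - Z k) ^ 2)) with (rho ^ 2 * w) by (unfold w; ring).
    assert (rho ^ 2 <= exp (- w)) by (unfold dl in HD; lra).
    fold w. nra. }
  rewrite lam2 in Hs.
  replace (rho ^ 2 * (dl / (rho ^ 2 * r ^ 2) * Qd n X Z)) with (dl * (Qd n X Z / r ^ 2)) in Hs by (field; nra).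
  assert (Qd n X Z / r ^ 2 <= 1) by nra.
  apply Rmult_le_reg_r with (/ r ^ 2). apply Rinv_0_lt_compat; nra.
  rewrite Rinv_r by nra. exact H1.
Qed.

Lemma claimB X : Qd n X Z <= rho ^ 2 * r ^ 2 -> saf_net n Z lam X >= tau.
Proof.
  intros HQ. rewrite saf_D. unfold tau. destruct (D_upper X) as [HD HD0]. pose proof dl_pos.
  assert (Dd X <= dl).
  { eapply Rle_trans; [exact HD|]. rewrite lam2.
    apply Rle_trans with (dl / (rho ^ 2 * r ^ 2) * (rho ^ 2 * r ^ 2)).
    apply Rmult_le_compat_l; auto. apply Rmult_le_pos; [lra|left; apply Rinv_0_lt_compat; apply Rmult_lt_0_compat; apply pow_lt; lra].
    right; field. split; apply Rgt_not_eq; lra. }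
  destruct (Req_dec (Dd X) dl) as [E|E]. rewrite E; lra.
  left. apply exp_increasing. nra.
Qed.

End Net.

Theorem lemma1 (n : nat) (Z : nat -> R) (r eps : R) :
  (1 <= n)%nat -> 0 < r -> 0 < eps < 1 ->
  exists lam tau : R, 0 < lam /\ 0 < tau < 1 /\
    exists mI mU : R,
      lebesgue_measure_is n
        (fun X => dist_n n X Z <= r /\ saf_net n Z lam X >= tau) mI /\
      lebesgue_measure_is n
        (fun X => dist_n n X Z <= r \/ saf_net n Z lam X >= tau) mU /\
      0 < mU /\
      mI / mU >= 1 - eps.
Proof.
  intros Hn Hr Heps.
  assert (HnR : 1 <= INR n) by (change 1 with (INR 1); apply le_INR; auto).
  set (rho := 1 - eps / INR n).
  assert (Hx : 0 < eps / INR n <= eps) by (split; [apply Rdiv_lt_0_compat; lra|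
     apply Rmult_le_reg_r with (INR n); [lra|]; unfold Rdiv; rewrite Rmult_assoc, Rinv_l by lra; nra]).
  assert (Hrho : 0 < rho < 1) by (unfold rho; lra).
  assert (Hdl : 0 < 1 - rho ^ 2 < 1) by nra.
  pose proof (claimA n Z r rho Hr Hrho) as HA.
  pose proof (claimB n Z r rho Hr Hrho) as HB.
  set (lam := sqrt (1 - rho ^ 2) / (rho * r)) in *.
  set (tau := exp (- (1 - rho ^ 2) ^ 2)) in *.
  exists lam, tau. split.
  { unfold lam. apply Rdiv_lt_0_compat. apply sqrt_lt_R0; lra. nra. }
  split.
  { split. apply exp_pos. rewrite <- exp_0. apply exp_increasing. nra. }
  set (I := fun X => dist_n n X Z <= r /\ saf_net n Z lam X >= tau).
  set (U := fun X => dist_n n X Z <= r \/ saf_net n Z lam X >= tau).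
  assert (HU : forall X, U X -> Qd n X Z <= r ^ 2).
  { intros X [H|H]. apply dist_le; lra. apply HA; auto. }
  destruct (measure_exists n I Z r Hn ltac:(lra)) as [mI HmI].
  { intros X HX. apply coord_bound; auto. apply HU; left; apply HX. }
  destruct (measure_exists n U Z r Hn ltac:(lra)) as [mU HmU].
  { intros X HX. apply coord_bound; auto. }
  exists mI, mU. split; [exact HmI|]. split; [exact HmU|].
  set (h := r / INR n).
  assert (Hh : 0 < h) by (apply Rdiv_lt_0_compat; lra).
  assert (HmUp : 0 < mU).
  { apply Rlt_le_trans with (box_vol n (fun i => Z i - h) (fun i => Z i + h)).
    - apply rprod_pos; intros; lra.
    - apply (proj2 HmU). intros s Hs. apply (pos_measure n U); auto.
      intros; lra.
      intros X HX. left. apply dist_le; [lra|].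
      apply Rle_trans with (rsum n (fun _ => h ^ 2 * 1)).
      + apply rsum_le; intros k Hk. specialize (HX k Hk). rewrite Rmult_1_r.
        assert (-h <= X k - Z k <= h) by lra. nra.
      + rewrite rsum_scal, rsum_const1. unfold h.
        replace ((r / INR n) ^ 2 * INR n) with (r ^ 2 / INR n) by (field; lra).
        apply Rmult_le_reg_r with (INR n); [lra|]. unfold Rdiv; rewrite Rmult_assoc, Rinv_l by lra. nra. }
  assert (Hkey : rho ^ n * mU <= mI).
  { apply (proj2 HmI). intros s [a [b [Hab [Hcov Hs]]]].
    set (a' := fun k i => Z i + (a k i - Z i) * / rho).
    set (b' := fun k i => Z i + (b k i - Z i) * / rho).
    assert (Hir : 0 < / rho) by (apply Rinv_0_lt_compat; lra).
    assert (Hc : cover_sums n U (s * (/ rho) ^ n)).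
    { exists a', b'. split; [|split].
      - intros k i; unfold a', b'. specialize (Hab k i).
        apply Rplus_le_compat_l, Rmult_le_compat_r; lra.
      - intros X HX. set (Y := fun i => Z i + rho * (X i - Z i)).
        assert (HQ : Qd n Y Z = rho ^ 2 * Qd n X Z).
        { unfold Qd. rewrite <- rsum_scal. apply rsum_ext; intros; unfold Y; ring. }
        pose proof (HU X HX).
        assert (HY : I Y).
        { split. apply dist_le; [lra|]. rewrite HQ. nra.
          apply HB. rewrite HQ. nra. }
        destruct (Hcov Y HY) as [k Hk]. exists k. intros i Hi. specialize (Hk i Hi).
        unfold Y in Hk. unfold a', b'.
        replace (X i) with (Z i + (rho * (X i - Z i)) * / rho) by (field; lra).
        split; apply Rplus_le_compat_l, Rmult_le_compat_r; lra.
      - apply (infinite_sum_scal (fun k => box_vol n (a k) (b k)) _ ((/ rho) ^ n)) in Hs.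
        intros e He; destruct (Hs e He) as [N HN]; exists N; intros m Hm.
        replace (sum_f_R0 (fun k => box_vol n (a' k) (b' k)) m)
          with (sum_f_R0 (fun k => box_vol n (a k) (b k) * (/ rho) ^ n) m). apply HN; auto.
        apply sum_eq; intros k _. unfold box_vol. rewrite <- rprod_scal.
        apply rprod_ext; intros; unfold a', b'; ring. }
    pose proof (proj1 HmU _ Hc).
    assert (rho ^ n * (/ rho) ^ n = 1).
    { rewrite <- Rpow_mult_distr, Rinv_r, pow1; lra. }
    assert (0 < rho ^ n) by (apply pow_lt; lra).
    apply Rle_trans with (rho ^ n * (s * (/ rho) ^ n)).
    apply Rmult_le_compat_l; lra.
    replace (rho ^ n * (s * (/ rho) ^ n)) with (s * (rho ^ n * (/ rho) ^ n)) by ring.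
    rewrite H0; lra. }
  assert (Hb : 1 - eps <= rho ^ n).
  { unfold rho. pose proof (bern n (eps / INR n) ltac:(lra)).
    replace (INR n * (eps / INR n)) with eps in H by (field; lra). lra. }
  split; [exact HmUp|]. apply Rle_ge. apply Rmult_le_reg_r with mU; auto.
  unfold Rdiv; rewrite Rmult_assoc, Rinv_l by lra. nra.
Qed.
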